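(* (1) Let $(X,* )$ be a semi-group satisfying $a*b*b*c=a*b*c$ for all $a,b,c\in X$. Then the zeroth lbo homology group is $H_0(X)=\mathbb{Z}X/\!\sim$, the free abelian group on the equivalence classes of the equivalence relation $\sim$ on $X$ generated by $a\sim b$ whenever there exist $x,y\in X$ with $a=x*y*x$ and $b=y*x*y$. (2) Let $(X,* )$ be a proto unital shelf or an idempotent semi-group. Then $H_0(X)=\mathbb{Z}X/\!\approx$, where $\approx$ is the equivalence relation on $X$ generated by $a\approx b$ whenever there exist $x,y\in X$ with $a=x*y$ and $b=y*x$. In particular, if $(X,* )$ is commutative, $H_0(X)=\mathbb{Z}X$.
   Context: For a semi-group $(X,* )$ satisfying $a*b*b*c=a*b*c$ (this includes associative shelves, proto unital shelves and idempotent semi-groups), the lbo chain complex has $C_n=\mathbb{Z}X^{n+1}$ ($n\ge0$) and $\partial_n=\sum_{i=0}^n(-1)^id_i$, where $d_0(x_0,\dots,x_n)=(x_0*x_1,x_2,\dots,x_{n-1},x_n*x_0)$, $d_n(x_0,\dots,x_n)=(x_n*x_0,x_1,\dots,x_{n-2},x_{n-1}*x_n)$, and for $0<i<n$, $d_i(x_0,\dots,x_n)=(x_0,\dots,x_{i-1}*x_i,x_i*x_{i+1},\dots,x_n)$; in particular $\partial_1(x_0,x_1)=x_0*x_1*x_0-x_1*x_0*x_1\in\mathbb{Z}X$. The lbo homology $H_n(X)$ is the homology of this complex, so $H_0(X)=\mathbb{Z}X/\operatorname{im}\partial_1$. A shelf is a set with operation satisfying $(a*b)*c=(a*c)*(b*c)$;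 a proto unital shelf is a shelf with $a*b=b*(a*b)$ and $a*b=(a*b)*b$ for all $a,b$ (these are associative). An idempotent semi-group is an associative magma with $a*a=a$ for all $a$. *)

(* Defs.v *)
From HB Require Import structures.
From mathcomp Require Import all_boot all_order all_algebra.
From mathcomp Require Import freeg.
From Stdlib Require Import Relations.Relation_Operators.

Set Implicit Arguments.
Unset Strict Implicit.
Unset Printing Implicit Defensive.

Import GRing.Theory.
Local Open Scope ring_scope.

Notation ZX X := {freeg X / int}.

Definition gen (X : choiceType) (x : X) : ZX X := Freeg [:: (1%R, x)].

Section LBO.
Context (X : choiceType) (op : X -> X -> X).
Local Notation "a * b" := (op a b).

(* lbo boundary d_1 : C_1 = Z X^2 -> C_0 = Z X on generators:
   d_1(x0, x1) = x0*x1*x0 - x1*x0*x1 (products bracketed to the left). *)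
Definition lbo_d1 (x0 x1 : X) : ZX X := gen (x0 * x1 * x0) - gen (x1 * x0 * x1).

Definition in_im_d1 (z : ZX X) : Prop :=
  exists s : seq (int * (X * X)),
    z = \sum_(t <- s) (t.1 *: lbo_d1 t.2.1 t.2.2).

(* H_0(X) = Z X / im d_1 "is" the free abelian group on the classes of the
   equivalence relation generated by R: for every model T of the quotient
   set X / ~ (a type T with a surjection pi : X -> T whose fibres are exactly
   the ~-classes), the canonical map Z X -> Z T induced by pi is surjective
   and its kernel is exactly im d_1; hence it induces an isomorphism
   H_0(X) = Z X / im d_1 ~= Z[X/~]. *)
Definition H0_is_free_on_classes (R : X -> X -> Prop) : Prop :=
  forall (T : choiceType) (pi : X -> T),
    (forall t : T, exists x : X, pi x = t) ->
    (forall a b : X, pi a = pi b <-> clos_refl_sym_trans X R a b) ->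
    let q : ZX X -> ZX T := fglift (fun x => gen (pi x)) in
    (forall w : ZX T, exists z : ZX X, q z = w) /\
    (forall z : ZX X, q z = 0 <-> in_im_d1 z).

Definition rel_xyx (a b : X) : Prop :=
  exists x y : X, a = x * y * x /\ b = y * x * y.

Definition rel_xy (a b : X) : Prop :=
  exists x y : X, a = x * y /\ b = y * x.

Definition is_semigroup : Prop := associative op.

Definition is_shelf : Prop :=
  forall a b c : X, (a * b) * c = (a * c) * (b * c).

Definition is_proto_unital_shelf : Prop :=
  is_shelf /\ (forall a b : X, a * b = b * (a * b)) /\
  (forall a b : X, a * b = (a * b) * b).

Definition is_idempotent_semigroup : Prop :=
  is_semigroup /\ (forall a : X, a * a = a).

End LBO.

(* Main.v *)
Require Import Defs.
From HB Require Import structures.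
From mathcomp Require Import all_boot all_order all_algebra.
From mathcomp Require Import freeg.
From Stdlib Require Import Relations.Relation_Operators.
Import GRing.Theory.
Local Open Scope ring_scope.

Section Gen.
Context (K : choiceType).

Lemma fgB (M : lmodType int) (f : K -> M) (a b : ZX K) :
  fglift f (a - b) = fglift f a - fglift f b.
Proof. exact: (lift_is_additive f). Qed.

Lemma fg0 (M : lmodType int) (f : K -> M) : fglift f 0 = 0.
Proof. by rewrite -(subrr 0) fgB subrr. Qed.

Lemma fgN (M : lmodType int) (f : K -> M) (a : ZX K) :
  fglift f (- a) = - fglift f a.
Proof. by have := @fgB M f 0 a; rewrite sub0r fg0 sub0r. Qed.

Lemma fgD (M : lmodType int) (f : K -> M) (a b : ZX K) :
  fglift f (a + b) = fglift f a + fglift f b.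
Proof. by have := @fgB M f a (- b); rewrite opprK fgN opprK. Qed.

Lemma U_scale (k : int) (x : K) : << k *g x >> = k *: gen x.
Proof.
apply/eqP; apply/(@freeg_eqP int K) => y; rewrite coeffZ /gen !coeffU.
by rewrite mul1r.
Qed.

Lemma fgZ (M : lmodType int) (f : K -> M) (k : int) (a : ZX K) :
  fglift f (k *: a) = k *: fglift f a.
Proof.
elim/freeg_ind_dom0: a => [|c x D _ _ IH]; first by rewrite scaler0 fg0 scaler0.
rewrite scalerDr !fgD IH scalerDr; congr (_ + _); rewrite U_scale scalerA -!U_scale !liftU scalerA.
done.
Qed.

Lemma fg_gen (M : lmodType int) (f : K -> M) (x : K) : fglift f (gen x) = f x.
Proof. by rewrite /gen liftU scale1r. Qed.

End Gen.
Section Gen2.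
Context (K : choiceType).
Variable R : K -> K -> Prop.

Inductive inspan : ZX K -> Prop :=
| sp0 : inspan 0
| spS k a b z : R a b -> inspan z -> inspan (k *: (gen a - gen b) + z).

Lemma inspanD z1 z2 : inspan z1 -> inspan z2 -> inspan (z1 + z2).
Proof.
move=> h1 h2; elim: h1 => [|k a b z r _ IH]; first by rewrite add0r.
by rewrite -addrA; apply: spS.
Qed.

Lemma inspanZ k z : inspan z -> inspan (k *: z).
Proof.
elim => [|c a b w r _ IH]; first by rewrite scaler0; exact: sp0.
by rewrite scalerDr scalerA; apply: spS.
Qed.

Lemma inspan_crst a b : clos_refl_sym_trans K R a b -> inspan (gen a - gen b).
Proof.
elim => {a b} [a b r| a | a b _ IH | a b c _ IH1 _ IH2].
- by rewrite -[_ - _]addr0 -[_ - _]scale1r; apply: spS => //; exact: sp0.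
- by rewrite subrr; exact: sp0.
- by rewrite -opprB -scaleN1r; apply: inspanZ.
- by have := inspanD _ _ IH1 IH2; rewrite addrA subrK.
Qed.

Lemma general (T : choiceType) (pi : K -> T) :
    (forall t : T, exists x : K, pi x = t) ->
    (forall a b : K, pi a = pi b <-> clos_refl_sym_trans K R a b) ->
    let q : ZX K -> ZX T := fglift (fun x => gen (pi x)) in
    (forall w : ZX T, exists z : ZX K, q z = w) /\
    (forall z : ZX K, q z = 0 <-> inspan z).
Proof.
move=> surj hpi q.
have surj' t : exists x, pi x == t by have [x <-] := surj t; exists x.
pose s t := xchoose (surj' t).
have hs t : pi (s t) = t by apply/eqP; exact: (xchooseP (surj' t)).
split.
  elim/freeg_ind_dom0 => [|k t D _ _ [zD hD]].
    by exists 0; rewrite /q fg0.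
  exists (<< k *g s t >> + zD); move: hD; rewrite /q fgD liftU hs => ->. 
  by congr (_ + _); symmetry; exact: U_scale.
pose r : ZX T -> ZX K := fglift (fun t => gen (s t)).
have key z : inspan (z - r (q z)).
  elim/freeg_ind_dom0: z => [|k x D _ _ IH].
    by rewrite /q /r !fg0 subrr; exact: sp0.
  rewrite /q /r fgD liftU fgD fgZ fg_gen.
  have -> : << k *g x >> + D -
     (k *: gen (s (pi x)) + fglift (fun t => gen (s t)) (fglift (fun x => gen (pi x)) D))
     = k *: (gen x - gen (s (pi x))) + (D - r (q D)).
    by rewrite U_scale scalerBr /r /q; rewrite opprD !addrA; congr (_ + _);
       rewrite -!addrA; congr (_ + _); rewrite addrC.
  apply: inspanD => //; apply: inspanZ; apply: inspan_crst.
  by apply/hpi; rewrite hs.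
move=> z; split.
  by move=> hz; have := key z; rewrite hz /r fg0 subr0.
elim => [|k a b w rab _ IH]; first by rewrite /q fg0.
rewrite /q fgD fgZ fgB !fg_gen.
have -> : pi a = pi b by apply/hpi; exact: rst_step.
by rewrite subrr scaler0 add0r.
Qed.

Lemma crst_mono (R2 : K -> K -> Prop) :
  (forall a b, R a b -> clos_refl_sym_trans K R2 a b) ->
  forall a b, clos_refl_sym_trans K R a b -> clos_refl_sym_trans K R2 a b.
Proof.
move=> h a b; elim => {a b} [a b r| a | a b _ IH | a b c _ IH1 _ IH2].
- exact: h.
- exact: rst_refl.
- exact: rst_sym.
- exact: rst_trans IH1 IH2.
Qed.

End Gen2.

Section Main.
Context (X : choiceType) (op : X -> X -> X).

Lemma im_d1_span z : in_im_d1 op z <-> @inspan X (rel_xyx op) z.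
Proof.
split.
  case=> s ->; elim: s => [|[k [x y]] s IH]; first by rewrite big_nil; exact: sp0.
  rewrite big_cons /=; apply: spS => //; by exists x, y.
elim => [|k a b w [x [y [-> ->]]] _ [s ->]].
  by exists [::]; rewrite big_nil.
by exists ((k, (x, y)) :: s); rewrite big_cons.
Qed.

Lemma part1 : H0_is_free_on_classes op (rel_xyx op).
Proof.
move=> T pi surj hpi q.
have [h1 h2] := @general X (rel_xyx op) T pi surj hpi.
split => // z; have := h2 z; have := im_d1_span z; rewrite /q; tauto.
Qed.

Lemma transfer (R2 : X -> X -> Prop) :
  (forall a b, rel_xyx op a b -> clos_refl_sym_trans X R2 a b) ->
  (forall a b, R2 a b -> clos_refl_sym_trans X (rel_xyx op) a b) ->
  H0_is_free_on_classes op R2.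
Proof.
move=> h12 h21 T pi surj hpi.
apply: part1 => // a b; split.
  by move=> /hpi H; apply: (@crst_mono X _ _ h21).
by move=> H; apply/hpi; apply: (@crst_mono X _ _ h12).
Qed.

Lemma all_zero : (forall x y, lbo_d1 op x y = 0) ->
  forall z, in_im_d1 op z -> z = 0.
Proof.
move=> h z [s ->]; rewrite big1 // => t _; by rewrite h scaler0.
Qed.

End Main.

Theorem proposition2p2 (X : choiceType) (op : X -> X -> X) :
  (* (1) *)
  (is_semigroup op ->
   (forall a b c : X, op (op (op a b) b) c = op (op a b) c) ->
   H0_is_free_on_classes op (rel_xyx op)) /\
  (* (2) *)
  (is_proto_unital_shelf op \/ is_idempotent_semigroup op ->
   H0_is_free_on_classes op (rel_xy op) /\
   (* in particular, if commutative, H_0(X) = Z X, i.e. im d_1 = 0 *)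
   (commutative op -> forall z : ZX X, in_im_d1 op z -> z = 0)).
Proof.
split; first by move=> _ _; exact: part1.
case=> [[S [L Rr]] | [A I]].
- have A : forall a b c, op (op a b) c = op a (op b c).
    move=> a b c; rewrite S.
    rewrite (S a c (op b c)) -L.
    by rewrite -Rr.
  have xyx : forall x y, op (op x y) x = op y x.
    by move=> x y; rewrite A -L.
  split.
    apply: transfer.
      move=> a b [x [y [-> ->]]]; apply: rst_step; exists y, x.
      by rewrite !xyx.
    move=> a b [x [y [-> ->]]]; apply: rst_step; exists y, x.
    by rewrite !xyx.
  move=> C; apply: all_zero => x y; by rewrite /lbo_d1 !xyx C subrr.
- have A' : forall a b c, op (op a b) c = op a (op b c) by move=> a b c; rewrite A.
  have idem' : forall a w, op a (op a w) = op a w by move=> a w; rewrite A I.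
  have idem2 : forall a b, op a (op b (op a b)) = op a b by move=> a b; rewrite A I.
  split.
    apply: transfer.
      move=> a b [x [y [-> ->]]].
      apply: (rst_trans _ _ _ (op x y)).
        apply: (rst_trans _ _ _ (op x (op x y))).
          by apply: rst_step; exists (op x y), x.
        by rewrite A I; exact: rst_refl.
      apply: (rst_trans _ _ _ (op y x)).
        by apply: rst_step; exists x, y.
      apply: (rst_trans _ _ _ (op y (op y x))).
        by rewrite A I; exact: rst_refl.
      by apply: rst_step; exists y, (op y x).
    move=> a b [x [y [-> ->]]]; apply: rst_step; exists (op x y), (op y x).
    split.
      by rewrite !A' !idem' idem2.
    by rewrite !A' !idem' idem2.
  move=> C; apply: all_zero => x y.
  have e u v : op (op u v) u = op u v by rewrite A' (C v u) idem'.
  by rewrite /lbo_d1 !e (C y x) subrr.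
Qed.
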